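(* Let $v,w\in\mathbb C\cong\mathbb R^2$ be linearly independent (with no restriction on their lengths). Let the tracer point of a Prytz planimeter of length $\ell$ traverse the closed polygonal ''figure eight'' with successive vertices $0,v,v+w,w,-w,-v-w,-v,0$ (base point $0$). Then the resulting holonomy $\tilde H:S^1\to S^1$ is represented by a matrix in $SU(1,1)$ of trace $2+16\operatorname{Im}^2(\bar bd)\,|ad+bc|^2>2$, where $a=\cosh\frac{|v|}{2\ell}$, $b=-\sinh\frac{|v|}{2\ell}\frac{v}{|v|}$, $c=\cosh\frac{|w|}{2\ell}$, $d=-\sinh\frac{|w|}{2\ell}\frac{w}{|w|}$. In particular $\tilde H$ has exactly two fixed points on $S^1$ (one attracting, one repelling), even though the oriented area enclosed by this loop is $0$ and the loop may be arbitrarily short. *)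

(* Defs.v *)
From Stdlib Require Import Reals List.
From Coquelicot Require Import Coquelicot.
Open Scope R_scope.

(* Configuration of a Prytz planimeter of length l: the tracer point is
   gamma t, the rod direction is the unit complex number u t, the blade
   (hatchet) point is gamma t - l * u t.  The no-skid constraint says that
   the velocity of the blade is parallel to the rod, i.e.
   Im (conj(u) * blade') = 0. *)
Definition planimeter_motion (l : R) (gamma u : R -> C) : Prop :=
  forall t, 0 <= t <= 1 ->
    Cmod (u t) = 1 /\
    exists dg du : C,
      is_derive gamma t dg /\ is_derive u t du /\
      Im (Cmult (Cconj (u t)) (Cminus dg (Cmult (RtoC l) du))) = 0.

Definition seg_hol (l : R) (p q z0 z1 : C) : Prop :=
  exists u : R -> C, u 0 = z0 /\ u 1 = z1 /\
    planimeter_motion l (fun t => Cplus p (Cmult (RtoC t) (Cminus q p))) u.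

Fixpoint poly_hol (l : R) (vs : list C) (z0 zn : C) : Prop :=
  match vs with
  | p :: ((q :: _) as rest) => exists z1, seg_hol l p q z0 z1 /\ poly_hol l rest z1 zn
  | _ => z0 = zn
  end.

Record cmat2 := CMat2 { m11 : C; m12 : C; m21 : C; m22 : C }.

Definition mdet (M : cmat2) : C :=
  Cminus (Cmult (m11 M) (m22 M)) (Cmult (m12 M) (m21 M)).
Definition mtrace (M : cmat2) : C := Cplus (m11 M) (m22 M).

(* SU(1,1) = { M : det M = 1 and M^* J M = J }, J = diag(1,-1);
   the matrix identity M^* J M = J written entrywise. *)
Definition in_SU11 (M : cmat2) : Prop :=
  mdet M = RtoC 1 /\
  Cminus (Cmult (Cconj (m11 M)) (m11 M)) (Cmult (Cconj (m21 M)) (m21 M)) = RtoC 1 /\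
  Cminus (Cmult (Cconj (m11 M)) (m12 M)) (Cmult (Cconj (m21 M)) (m22 M)) = RtoC 0 /\
  Cminus (Cmult (Cconj (m12 M)) (m11 M)) (Cmult (Cconj (m22 M)) (m21 M)) = RtoC 0 /\
  Cminus (Cmult (Cconj (m12 M)) (m12 M)) (Cmult (Cconj (m22 M)) (m22 M)) = RtoC (-1).

Definition mob (M : cmat2) (z : C) : C :=
  Cdiv (Cplus (Cmult (m11 M) z) (m12 M)) (Cplus (Cmult (m21 M) z) (m22 M)).

Definition on_circle (z : C) : Prop := Cmod z = 1.

Definition attracting_on_circle (f : C -> C) (z1 : C) : Prop :=
  exists eps, 0 < eps /\
    forall z, on_circle z -> Cmod (Cminus z z1) < eps ->
      is_lim_seq (fun n => Cmod (Cminus (Nat.iter n f z) z1)) 0.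

Definition repelling_on_circle (f : C -> C) (z2 : C) : Prop :=
  exists eps, 0 < eps /\
    forall z, on_circle z -> 0 < Cmod (Cminus z z2) < eps ->
      exists n : nat, eps <= Cmod (Cminus (Nat.iter n f z) z2).

(* Main.v *)
Require Import Defs.
From Stdlib Require Import Reals List Lra Lia Psatz Nsatz.
From Coquelicot Require Import Coquelicot.
Import ListNotations.
Open Scope R_scope.

Lemma cder_split (f : R -> C) t d1 d2 :
  is_derive f t (d1,d2) <-> is_derive (fun s => fst (f s)) t d1 /\ is_derive (fun s => snd (f s)) t d2.
Proof.
  split.
  - intros H; split.
    + unfold is_derive in *.
      eapply filterdiff_ext_lin.
      apply (filterdiff_comp' f (fun p : C => fst p) t _ _ H (filterdiff_linear _ is_linear_fst)).
      intros y; reflexivity.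
    + unfold is_derive in *.
      eapply filterdiff_ext_lin.
      apply (filterdiff_comp' f (fun p : C => snd p) t _ _ H (filterdiff_linear _ is_linear_snd)).
      intros y; reflexivity.
  - intros [H1 H2]. unfold is_derive in *.
    eapply filterdiff_ext_lin.
    eapply filterdiff_ext.
    2: apply (filterdiff_comp'_2 (W:=prod_NormedModule R_AbsRing R_NormedModule R_NormedModule) (fun s => fst (f s)) (fun s => snd (f s)) (fun a b => (a,b)) t _ _ (fun a b => (a,b)) H1 H2).
    + intros y; simpl. destruct (f y); reflexivity.
    + apply (filterdiff_linear (fun p : prod_NormedModule R_AbsRing R_NormedModule R_NormedModule => (fst p, snd p))).
      apply is_linear_prod; [apply is_linear_fst | apply is_linear_snd].
    + intros y; reflexivity.
Qed.

Lemma is_derive_eqv (f:R->R) (t l l' : R) : is_derive f t l -> l = l' -> is_derive f t l'.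
Proof. intros H <-; exact H. Qed.

Lemma rder_ext (f g : R -> R) (t l : R) : (forall s, f s = g s) -> is_derive f t l -> is_derive g t l.
Proof. intros H1 H2. exact (is_derive_ext f g t l H1 H2). Qed.

Lemma rder_const (a t : R) : is_derive (fun _ : R => a) t 0.
Proof. exact (is_derive_const a t). Qed.

Lemma rder_mult (f g : R -> R) t df dg : is_derive f t df -> is_derive g t dg ->
  is_derive (fun s => f s * g s) t (df * g t + f t * dg).
Proof. intros. apply (is_derive_mult f g t df dg); auto. intros; apply Rmult_comm. Qed.
Lemma rder_plus (f g : R -> R) t df dg : is_derive f t df -> is_derive g t dg ->
  is_derive (fun s => f s + g s) t (df + dg).
Proof. intros. apply (is_derive_plus f g t df dg); auto. Qed.
Lemma rder_minus (f g : R -> R) t df dg : is_derive f t df -> is_derive g t dg ->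
  is_derive (fun s => f s - g s) t (df - dg).
Proof. intros. apply (is_derive_minus f g t df dg); auto. Qed.
Lemma rder_opp (f : R -> R) t df : is_derive f t df -> 
  is_derive (fun s => - f s) t (- df).
Proof. intros. apply (is_derive_opp f t df); auto. Qed.

Lemma cder_mult (f g : R -> C) t df dg : is_derive f t df -> is_derive g t dg ->
  is_derive (fun s => Cmult (f s) (g s)) t (Cplus (Cmult df (g t)) (Cmult (f t) dg)).
Proof.
  destruct df as [a1 a2], dg as [b1 b2]. intros Hf Hg.
  apply cder_split in Hf, Hg. destruct Hf as [F1 F2], Hg as [G1 G2].
  apply cder_split. simpl. split.
  - eapply is_derive_eqv. apply rder_minus; apply rder_mult; eauto. cbv beta; ring.
  - eapply is_derive_eqv. apply rder_plus; apply rder_mult; eauto. cbv beta; ring.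
Qed.

Lemma cder_plus (f g : R -> C) t df dg : is_derive f t df -> is_derive g t dg ->
  is_derive (fun s => Cplus (f s) (g s)) t (Cplus df dg).
Proof.
  destruct df as [a1 a2], dg as [b1 b2]. intros Hf Hg.
  apply cder_split in Hf, Hg. destruct Hf as [F1 F2], Hg as [G1 G2].
  apply cder_split. simpl. split; apply rder_plus; auto.
Qed.

Lemma cder_minus (f g : R -> C) t df dg : is_derive f t df -> is_derive g t dg ->
  is_derive (fun s => Cminus (f s) (g s)) t (Cminus df dg).
Proof.
  destruct df as [a1 a2], dg as [b1 b2]. intros Hf Hg.
  apply cder_split in Hf, Hg. destruct Hf as [F1 F2], Hg as [G1 G2].
  apply cder_split. simpl. split; apply rder_plus; auto; apply rder_opp; auto.
Qed.

Lemma cder_conj (f : R -> C) t df : is_derive f t df ->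
  is_derive (fun s => Cconj (f s)) t (Cconj df).
Proof.
  destruct df as [a1 a2]. intros Hf.
  apply cder_split in Hf. destruct Hf as [F1 F2].
  apply cder_split. simpl. split; auto. apply rder_opp; auto.
Qed.

Lemma cder_const (z : C) (t : R) : is_derive (fun _ : R => z) t (RtoC 0).
Proof. apply cder_split; split; simpl; apply rder_const. Qed.

Lemma cder_RtoC (f : R -> R) t df : is_derive f t df -> is_derive (fun s => RtoC (f s)) t (RtoC df).
Proof. intros. apply cder_split; split; simpl; auto. apply rder_const. Qed.

Lemma cder_inv (g : R -> C) t dg : is_derive g t dg -> g t <> RtoC 0 ->
  is_derive (fun s => Cinv (g s)) t (Copp (Cdiv dg (Cmult (g t) (g t)))).
Proof.
  destruct dg as [b1 b2]. intros Hg Hn.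
  apply cder_split in Hg. destruct Hg as [G1 G2].
  destruct (g t) as [x y] eqn:E.
  assert (Hxy : x^2 + y^2 <> 0).
  { intro H0. apply Hn. assert (x = 0) by nra. assert (y = 0) by nra. subst. reflexivity. }
  assert (Hp : 0 < x^2 + y^2) by (assert (0 <= x^2) by nra; assert (0 <= y^2) by nra; lra).
  assert (Dn : is_derive (fun s => fst (g s) * fst (g s) + snd (g s) * snd (g s)) t (2 * x * b1 + 2 * y * b2)).
  { eapply is_derive_eqv. apply rder_plus; apply rder_mult; eauto.
    cbv beta; rewrite ?E; simpl; ring. }
  assert (Dn2 : fst (g t) * fst (g t) + snd (g t) * snd (g t) <> 0) by (cbv beta; rewrite ?E; simpl; nra).
  assert (EQ: forall s, fst (g s) ^ 2 + snd (g s) ^ 2 = fst (g s) * fst (g s) + snd (g s) * snd (g s)) by (intros; ring).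
  apply cder_split. simpl. split.
  - apply (rder_ext (fun s => fst (g s) * / (fst (g s) * fst (g s) + snd (g s) * snd (g s)))).
    intros s; rewrite !Rmult_1_r; reflexivity.
    eapply is_derive_eqv. apply rder_mult. apply G1. apply (is_derive_inv _ _ _ Dn Dn2).
    cbv beta; rewrite ?E; simpl. field. split; intro HH; nra.
  - apply (rder_ext (fun s => - snd (g s) * / (fst (g s) * fst (g s) + snd (g s) * snd (g s)))).
    intros s; rewrite !Rmult_1_r; reflexivity.
    eapply is_derive_eqv. apply rder_mult. apply rder_opp, G2. apply (is_derive_inv _ _ _ Dn Dn2).
    cbv beta; rewrite ?E; simpl. field. split; intro HH; nra.
Qed.

Lemma ch_sh (x : R) : cosh x * cosh x - sinh x * sinh x = 1.
Proof.
  unfold cosh, sinh. rewrite exp_Ropp. assert (exp x <> 0) by apply exp_neq_0. field. auto.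
Qed.
Lemma cosh_2x (x : R) : cosh (2*x) = cosh x * cosh x + sinh x * sinh x.
Proof.
  unfold cosh, sinh. replace (2*x) with (x+x) by ring. rewrite !exp_Ropp, exp_plus.
  assert (exp x <> 0) by apply exp_neq_0. field. auto.
Qed.
Lemma sinh_2x (x : R) : sinh (2*x) = 2 * sinh x * cosh x.
Proof.
  unfold cosh, sinh. replace (2*x) with (x+x) by ring. rewrite !exp_Ropp, exp_plus.
  assert (exp x <> 0) by apply exp_neq_0. field. auto.
Qed.
Lemma cosh_pos (x : R) : 0 < cosh x.
Proof. unfold cosh. assert (0 < exp x) by apply exp_pos. assert (0 < exp (-x)) by apply exp_pos. lra. Qed.
Lemma sinh_pos (x : R) : 0 < x -> 0 < sinh x.
Proof. intros. unfold sinh. assert (exp (-x) < exp x) by (apply exp_increasing; lra). lra. Qed.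
Lemma rder_cosh (k t : R) : is_derive (fun s => cosh (k*s)) t (k * sinh (k*t)).
Proof.
  eapply is_derive_eqv. apply (is_derive_comp cosh (fun s => k*s)).
  apply is_derive_Reals, derivable_pt_lim_cosh.
  eapply is_derive_eqv. apply (is_derive_scal (fun s => s)). apply is_derive_id. reflexivity.
  unfold scal, one; simpl. unfold mult; simpl. ring.
Qed.
Lemma rder_sinh (k t : R) : is_derive (fun s => sinh (k*s)) t (k * cosh (k*t)).
Proof.
  eapply is_derive_eqv. apply (is_derive_comp sinh (fun s => k*s)).
  apply is_derive_Reals, derivable_pt_lim_sinh.
  eapply is_derive_eqv. apply (is_derive_scal (fun s => s)). apply is_derive_id. reflexivity.
  unfold scal, one; simpl. unfold mult; simpl. ring.
Qed.

Definition nrm2 (z : C) : R := fst z * fst z + snd z * snd z.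

Lemma nrm2_nonneg z : 0 <= nrm2 z.
Proof. unfold nrm2. nra. Qed.

Lemma Cmod_nrm2 z : Cmod z = sqrt (nrm2 z).
Proof. unfold Cmod, nrm2. f_equal. ring. Qed.

Lemma Cmod1_nrm2 z : Cmod z = 1 <-> nrm2 z = 1.
Proof.
  rewrite Cmod_nrm2. split; intro H.
  - rewrite <- (sqrt_sqrt (nrm2 z)) by apply nrm2_nonneg. rewrite H; ring.
  - rewrite H; apply sqrt_1.
Qed.

Lemma nrm2_mult x y : nrm2 (Cmult x y) = nrm2 x * nrm2 y.
Proof. destruct x, y; unfold nrm2; simpl; ring. Qed.

Lemma nrm2_pos z : z <> RtoC 0 -> 0 < nrm2 z.
Proof.
  destruct z as [x y]; unfold nrm2; simpl; intros H.
  destruct (Req_dec x 0); destruct (Req_dec y 0); subst; try nra. exfalso; apply H; reflexivity.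
Qed.

Lemma nrm2_inv z : z <> RtoC 0 -> nrm2 (Cinv z) = / nrm2 z.
Proof.
  intros H. pose proof (nrm2_pos z H). destruct z as [x y]. unfold nrm2 in *; simpl in *.
  field. lra.
Qed.

Lemma nrm2_conj z : nrm2 (Cconj z) = nrm2 z.
Proof. destruct z; unfold nrm2; simpl; ring. Qed.

Lemma nrm2_eq0 z : nrm2 z = 0 -> z = RtoC 0.
Proof. intros H. destruct (Ceq_dec z (RtoC 0)); auto. pose proof (nrm2_pos z n). lra. Qed.

Lemma unit_conj z : nrm2 z = 1 -> Cconj z = Cinv z.
Proof.
  destruct z as [x y]; unfold nrm2; simpl; intros H.
  unfold Cconj, Cinv; simpl. replace (x*(x*1) + y*(y*1)) with (x*x+y*y) by ring. rewrite H.
  f_equal; field.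
Qed.

Lemma unit_nz z : nrm2 z = 1 -> z <> RtoC 0.
Proof. intros H E; subst; unfold nrm2 in H; simpl in H; lra. Qed.

Lemma conj_RtoC r : Cconj (RtoC r) = RtoC r.
Proof. unfold Cconj, RtoC; simpl; f_equal; ring. Qed.

Lemma Cmult_integral' x y : Cmult x y = RtoC 0 -> x = RtoC 0 \/ y = RtoC 0.
Proof.
  intros H. destruct (Ceq_dec x (RtoC 0)); auto. right.
  assert (HH: y = Cmult (Cinv x) (Cmult x y)) by (field; auto).
  rewrite HH, H. ring.
Qed.

Definition mobp (P : C * C) (z : C) : C :=
  Cdiv (Cplus (Cmult (fst P) z) (snd P)) (Cplus (Cmult (Cconj (snd P)) z) (Cconj (fst P))).
Definition pm (P Q : C * C) : C * C :=
  (Cplus (Cmult (fst P) (fst Q)) (Cmult (snd P) (Cconj (snd Q))),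
   Cplus (Cmult (fst P) (snd Q)) (Cmult (snd P) (Cconj (fst Q)))).
Definition su (P : C * C) : Prop := nrm2 (fst P) - nrm2 (snd P) = 1.
Definition pmat (P : C * C) : cmat2 := CMat2 (fst P) (snd P) (Cconj (snd P)) (Cconj (fst P)).

Lemma mob_pmat P z : mob (pmat P) z = mobp P z.
Proof. reflexivity. Qed.

Lemma nrm2_opp x : nrm2 (Copp x) = nrm2 x.
Proof. destruct x; unfold nrm2; simpl; ring. Qed.

Lemma den_nz P z : su P -> nrm2 z = 1 ->
  Cplus (Cmult (Cconj (snd P)) z) (Cconj (fst P)) <> RtoC 0.
Proof.
  intros HP Hz H. unfold su in HP.
  assert (E : Cmult (Cconj (snd P)) z = Copp (Cconj (fst P))).
  { replace (Cmult (Cconj (snd P)) z) with (Cminus (Cplus (Cmult (Cconj (snd P)) z) (Cconj (fst P))) (Cconj (fst P))) by ring.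
    rewrite H. ring. }
  apply (f_equal nrm2) in E. rewrite nrm2_mult, nrm2_opp, !nrm2_conj, Hz in E. lra.
Qed.

Lemma num_den_nrm2 P z : nrm2 z = 1 -> su P ->
  nrm2 (Cplus (Cmult (fst P) z) (snd P)) = nrm2 (Cplus (Cmult (Cconj (snd P)) z) (Cconj (fst P))).
Proof.
  destruct P as [[a1 a2] [b1 b2]], z as [x y]. unfold su, nrm2; simpl. intros Hz HP.
  match goal with |- ?L = ?R => assert (K: L - R = (a1*a1+a2*a2 - (b1*b1+b2*b2)) * (x*x+y*y - 1)) by ring end.
  rewrite Hz in K. lra.
Qed.

Lemma mob_circ P z : su P -> nrm2 z = 1 -> nrm2 (mobp P z) = 1.
Proof.
  intros HP Hz. unfold mobp, Cdiv. rewrite nrm2_mult, nrm2_inv by (apply den_nz; auto).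
  rewrite num_den_nrm2 by auto. field.
  pose proof (nrm2_pos _ (den_nz P z HP Hz)). lra.
Qed.

Lemma su_pm P Q : su P -> su Q -> su (pm P Q).
Proof.
  destruct P as [[a1 a2] [b1 b2]], Q as [[c1 c2] [d1 d2]]. unfold su, nrm2, pm; simpl. intros H1 H2.
  match goal with |- ?L = 1 => assert (K: L = (a1*a1+a2*a2-(b1*b1+b2*b2))*(c1*c1+c2*c2-(d1*d1+d2*d2))) by ring end.
  rewrite K, H1, H2; ring.
Qed.

Lemma mob_comp P Q z : su P -> su Q -> nrm2 z = 1 -> mobp P (mobp Q z) = mobp (pm P Q) z.
Proof.
  intros HP HQ Hz.
  pose proof (den_nz Q z HQ Hz) as D1.
  pose proof (den_nz P (mobp Q z) HP (mob_circ Q z HQ Hz)) as D2.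
  pose proof (den_nz (pm P Q) z (su_pm P Q HP HQ) Hz) as D3.
  destruct P as [al be], Q as [ga de]. unfold mobp, pm in *; simpl in *.
  rewrite !Cplus_conj, !Cmult_conj, !Cconj_conj in *.
  field. auto.
Qed.

Definition kk (l : R) (D : C) : R := Cmod D / (2*l).
Definition ee (D : C) : C := Cdiv D (RtoC (Cmod D)).
Definition segP (l : R) (D : C) : C * C :=
  (RtoC (cosh (kk l D)), Cmult (RtoC (sinh (kk l D))) (ee D)).
Definition flowP (K : R) (E : C) (t : R) : C * C :=
  (RtoC (cosh (K*t)), Cmult (RtoC (sinh (K*t))) E).

Lemma sinh_0' : sinh 0 = 0.
Proof. unfold sinh. rewrite Ropp_0. unfold Rdiv. ring. Qed.

Lemma Cmod_pos D : D <> RtoC 0 -> 0 < Cmod D.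
Proof.
  intros H. rewrite Cmod_nrm2. apply sqrt_lt_R0. apply nrm2_pos; auto.
Qed.

Lemma nrm2_ee D : D <> RtoC 0 -> nrm2 (ee D) = 1.
Proof.
  intros H. pose proof (Cmod_pos D H) as P. pose proof (Cmod_nrm2 D) as E.
  unfold ee, Cdiv. rewrite nrm2_mult, nrm2_inv.
  2:{ intro HH. injection HH. lra. }
  unfold nrm2 at 2. simpl.
  assert (nrm2 D = Cmod D * Cmod D).
  { rewrite E. rewrite sqrt_sqrt; auto. apply nrm2_nonneg. }
  rewrite H0. field. lra.
Qed.

Lemma D_eq l D : 0 < l -> D <> RtoC 0 -> D = Cmult (RtoC (2*l*kk l D)) (ee D).
Proof.
  intros Hl H. pose proof (Cmod_pos D H). unfold kk, ee.
  replace (2*l*(Cmod D/(2*l))) with (Cmod D) by (field; lra).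
  field. intro HH. injection HH. lra.
Qed.

Lemma su_flow K E t : nrm2 E = 1 -> su (flowP K E t).
Proof.
  intros HE. unfold su, flowP; simpl fst; simpl snd. rewrite nrm2_mult, HE.
  unfold nrm2; simpl. pose proof (ch_sh (K*t)). nra.
Qed.

Lemma su_flowinv K E t : nrm2 E = 1 -> su (RtoC (cosh (K*t)), Copp (Cmult (RtoC (sinh (K*t))) E)).
Proof.
  intros HE. unfold su; simpl fst; simpl snd. rewrite nrm2_opp, nrm2_mult, HE.
  unfold nrm2; simpl. pose proof (ch_sh (K*t)). nra.
Qed.

Lemma mobp_id E z : mobp (RtoC 1, Cmult (RtoC 0) E) z = z.
Proof.
  unfold mobp; simpl fst; simpl snd. rewrite Cmult_conj, !conj_RtoC. field.
Qed.

Lemma mobp_id' E z : mobp (RtoC 1, Copp (Cmult (RtoC 0) E)) z = z.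
Proof.
  unfold mobp; simpl fst; simpl snd. rewrite Copp_conj, Cmult_conj, !conj_RtoC. field.
Qed.

Lemma cder_eqv (f : R -> C) (t : R) (l l' : C) : is_derive f t l -> l = l' -> is_derive f t l'.
Proof. intros H <-; exact H. Qed.

Lemma rder_id (t : R) : is_derive (fun s : R => s) t 1.
Proof. exact (is_derive_id t). Qed.

Lemma gamma_derive p D t : is_derive (fun s => Cplus p (Cmult (RtoC s) D)) t D.
Proof.
  eapply cder_eqv. apply cder_plus. apply cder_const. apply cder_mult.
  apply cder_RtoC, rder_id. apply cder_const. cbv beta. ring.
Qed.

Lemma Im_real_sum (r : R) (w : C) : nrm2 w = 1 -> Im (Cmult (RtoC r) (Cplus w (Cinv w))) = 0.
Proof.
  intros H. rewrite <- (unit_conj w H). destruct w; unfold Im; simpl; ring.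
Qed.

Lemma seg_exists l p q z0 : 0 < l -> Cminus q p <> RtoC 0 -> nrm2 z0 = 1 ->
  seg_hol l p q z0 (mobp (segP l (Cminus q p)) z0).
Proof.
  intros Hl HD Hz.
  set (D := Cminus q p) in *.
  pose proof (nrm2_ee D HD) as HE. pose proof (D_eq l D Hl HD) as HDe.
  set (k := kk l D) in *. set (E := ee D) in *.
  assert (Hseg : segP l D = flowP k E 1) by (unfold segP, flowP; rewrite Rmult_1_r; reflexivity).
  rewrite Hseg. clearbody k E.
  exists (fun t => mobp (flowP k E t) z0).
  split. { unfold flowP. rewrite Rmult_0_r, cosh_0, sinh_0'. apply mobp_id. }
  split. reflexivity.
  intros t Ht. split. { apply Cmod1_nrm2, mob_circ; auto using su_flow. }
  exists D. eexists. split. { apply gamma_derive. }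
  clearbody D.
  split.
  { unfold mobp, flowP, Cdiv. cbn [fst snd].
    eapply cder_mult.
    - eapply cder_plus. eapply cder_mult. apply cder_RtoC, rder_cosh. apply cder_const.
      eapply cder_mult. apply cder_RtoC, rder_sinh. apply cder_const.
    - eapply cder_inv. eapply cder_plus. eapply cder_mult. eapply cder_conj. eapply cder_mult.
      apply cder_RtoC, rder_sinh. apply cder_const. apply cder_const. eapply cder_conj. apply cder_RtoC, rder_cosh.
      exact (den_nz (flowP k E t) z0 (su_flow k E t HE) Hz). }
  cbv beta.
  pose proof (den_nz (flowP k E t) z0 (su_flow k E t HE) Hz) as HQ.
  pose proof (mob_circ (flowP k E t) z0 (su_flow k E t HE) Hz) as Hu.
  rewrite (unit_conj _ Hu).
  unfold mobp, flowP, Cdiv in *. cbn [fst snd] in *.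
  rewrite !Cplus_conj, !Cmult_conj, !conj_RtoC, (unit_conj E HE) in *.
  rewrite HDe.
  set (c := cosh (k*t)) in *. set (s := sinh (k*t)) in *.
  assert (HEn : E <> RtoC 0) by (apply unit_nz; auto).
  set (U := Cmult (Cplus (Cmult (RtoC c) z0) (Cmult (RtoC s) E)) (Cinv (Cplus (Cmult (Cmult (RtoC s) (Cinv E)) z0) (RtoC c)))) in *.
  assert (HUn : U <> RtoC 0) by (apply unit_nz; auto).
  assert (HNn : Cplus (Cmult (RtoC c) z0) (Cmult (RtoC s) E) <> RtoC 0).
  { intro HN. apply HUn. unfold U. rewrite HN. ring. }
  match goal with |- Im ?X = 0 => assert (HX : X = Cmult (RtoC (l*k)) (Cplus (Cdiv U E) (Cinv (Cdiv U E)))) end.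
  { assert (HQ' : Cplus (Cmult (RtoC s) z0) (Cmult (RtoC c) E) <> RtoC 0).
    { intro HH. apply HQ. replace (Cplus (Cmult (Cmult (RtoC s) (Cinv E)) z0) (RtoC c)) with (Cmult (Cinv E) (Cplus (Cmult (RtoC s) z0) (Cmult (RtoC c) E))) by (field; auto).
      rewrite HH. ring. }
    unfold U. rewrite !RtoC_mult. field. repeat split; auto. }
  rewrite HX. apply Im_real_sum.
  unfold Cdiv. rewrite nrm2_mult, nrm2_inv, HE, Hu by auto. field.
Qed.

Lemma cder_unique (f : R -> C) t l1 l2 : is_derive f t l1 -> is_derive f t l2 -> l1 = l2.
Proof.
  destruct l1 as [a1 a2], l2 as [b1 b2]. intros H1 H2.
  apply cder_split in H1, H2. destruct H1 as [A1 A2], H2 as [B1 B2].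
  apply is_derive_unique in A1, A2, B1, B2. congruence.
Qed.

Lemma rder_cont (g : R -> R) t l : is_derive g t l -> continuity_pt g t.
Proof.
  intros H. apply continuity_pt_filterlim. apply (ex_derive_continuous g t). exists l. exact H.
Qed.

Lemma const_on01 (f : R -> C) :
  (forall t, 0 <= t <= 1 -> exists df : C, is_derive f t df /\ (0 < t < 1 -> df = RtoC 0)) -> f 1 = f 0.
Proof.
  intros H.
  assert (Hc : forall (g : C -> R), (g = fst \/ g = snd) -> g (f 1) = g (f 0)).
  { intros g Hg.
    destruct (MVT_gen (fun t => g (f t)) 0 1 (fun _ => 0)) as [c [_ Hcc]].
    - rewrite Rmin_left, Rmax_right by lra. intros x Hx.
      destruct (H x ltac:(lra)) as [[d1 d2] [Hd Hz]]. rewrite (Hz Hx) in Hd.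
      apply cder_split in Hd. destruct Hg; subst; simpl; tauto.
    - rewrite Rmin_left, Rmax_right by lra. intros x Hx.
      destruct (H x Hx) as [[d1 d2] [Hd _]].
      apply cder_split in Hd. destruct Hd as [D1 D2]. destruct Hg; subst; eapply rder_cont; eauto.
    - lra. }
  pose proof (Hc fst (or_introl eq_refl)) as A. pose proof (Hc snd (or_intror eq_refl)) as B.
  rewrite (surjective_pairing (f 1)), (surjective_pairing (f 0)), A, B; reflexivity.
Qed.

Lemma local_unit (u : R -> C) t du : 0 < t < 1 -> (forall s, 0 <= s <= 1 -> nrm2 (u s) = 1) ->
  is_derive u t du -> fst (u t) * fst du + snd (u t) * snd du = 0.
Proof.
  intros Ht Hu Hd. destruct du as [d1 d2]. apply cder_split in Hd. destruct Hd as [F1 F2].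
  assert (G1 : is_derive (fun s => fst (u s) * fst (u s) + snd (u s) * snd (u s)) t
                 (2 * (fst (u t) * d1 + snd (u t) * d2))).
  { eapply is_derive_eqv. apply rder_plus; apply rder_mult; eauto. cbv beta. ring. }
  assert (G2 : is_derive (fun s => fst (u s) * fst (u s) + snd (u s) * snd (u s)) t 0).
  { apply (is_derive_ext_loc (fun _ => 1)).
    - assert (He : 0 < Rmin t (1 - t)) by (apply Rmin_glb_lt; lra).
      exists (mkposreal _ He). intros s Hs. change (Rabs (s - t) < Rmin t (1-t)) in Hs.
      pose proof (Rmin_l t (1-t)). pose proof (Rmin_r t (1-t)).
      apply Rabs_def2 in Hs. symmetry. apply (Hu s). lra.
    - apply rder_const. }
  apply is_derive_unique in G1, G2. simpl. lra.
Qed.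

Lemma du_formula (u du E : C) (l K : R) : 0 < l -> nrm2 u = 1 -> nrm2 E = 1 ->
  fst u * fst du + snd u * snd du = 0 ->
  Im (Cmult (Cconj u) (Cminus (Cmult (RtoC (2*l*K)) E) (Cmult (RtoC l) du))) = 0 ->
  du = Cmult (RtoC K) (Cminus E (Cmult (Cconj E) (Cmult u u))).
Proof.
  destruct u as [x y], du as [d1 d2], E as [e1 e2]. unfold nrm2, Im; simpl.
  intros Hl Hu HE H1 H2.
  assert (H3 : x * d2 - y * d1 = 2 * K * (x * e2 - y * e1)).
  { apply (Rmult_eq_reg_l l); [|lra]. nra. }
  clear H2. apply injective_projections; unfold Cminus, Cplus, Copp, Cmult, Cconj; simpl; nsatz.
Qed.

Lemma cder_opp (f : R -> C) t df : is_derive f t df ->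
  is_derive (fun s => Copp (f s)) t (Copp df).
Proof.
  destruct df as [a1 a2]. intros Hf.
  apply cder_split in Hf. destruct Hf as [F1 F2].
  apply cder_split. simpl. split; apply rder_opp; auto.
Qed.

Lemma mobp_id0 z : mobp (RtoC 1, RtoC 0) z = z.
Proof. unfold mobp; simpl fst; simpl snd. rewrite !conj_RtoC. field. Qed.

Lemma pm_inv K E t : nrm2 E = 1 ->
  pm (flowP K E t) (RtoC (cosh (K*t)), Copp (Cmult (RtoC (sinh (K*t))) E)) = (RtoC 1, RtoC 0).
Proof.
  intros HE. pose proof (ch_sh (K*t)) as Hc.
  unfold pm, flowP; simpl fst; simpl snd.
  set (c := cosh (K*t)) in *. set (s := sinh (K*t)) in *. clearbody c s.
  destruct E as [e1 e2]. unfold nrm2 in HE; simpl in HE.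
  apply injective_projections; apply injective_projections;
  unfold Cminus, Cplus, Copp, Cmult, Cconj, RtoC; simpl; nsatz.
Qed.

Lemma seg_unique l p q z0 z1 : 0 < l -> Cminus q p <> RtoC 0 -> nrm2 z0 = 1 ->
  seg_hol l p q z0 z1 -> z1 = mobp (segP l (Cminus q p)) z0.
Proof.
  intros Hl HD Hz [u [H0 [H1 Hm]]].
  set (D := Cminus q p) in *.
  pose proof (nrm2_ee D HD) as HE. pose proof (D_eq l D Hl HD) as HDe.
  set (k := kk l D) in *. set (E := ee D) in *.
  assert (Hseg : segP l D = flowP k E 1) by (unfold segP, flowP; rewrite Rmult_1_r; reflexivity).
  rewrite Hseg. clearbody k E D.
  assert (Hun : forall s, 0 <= s <= 1 -> nrm2 (u s) = 1) by (intros s Hs; apply Cmod1_nrm2; apply (Hm s Hs)).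
  set (fi := fun t => (RtoC (cosh (k*t)), Copp (Cmult (RtoC (sinh (k*t))) E))).
  assert (Hf : (fun t => mobp (fi t) (u t)) 1 = (fun t => mobp (fi t) (u t)) 0).
  { apply (const_on01 (fun t => mobp (fi t) (u t))). intros t Ht.
    destruct (Hm t Ht) as [Hmod [dg [du [Hdg [Hdu Hcon]]]]].
    assert (dg = D) by (eapply cder_unique; [exact Hdg | apply gamma_derive]). subst dg.
    pose proof (Hun t Ht) as Hut.
    pose proof (den_nz (fi t) (u t) (su_flowinv k E t HE) Hut) as HQ.
    eexists. split.
    { unfold mobp, fi, Cdiv. cbn [fst snd].
      eapply cder_mult.
      - eapply cder_plus. eapply cder_mult. apply cder_RtoC, rder_cosh. exact Hdu.
        eapply cder_opp. eapply cder_mult. apply cder_RtoC, rder_sinh. apply cder_const.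
      - eapply cder_inv. eapply cder_plus. eapply cder_mult. eapply cder_conj. eapply cder_opp. eapply cder_mult.
        apply cder_RtoC, rder_sinh. apply cder_const. exact Hdu. eapply cder_conj. apply cder_RtoC, rder_cosh.
        exact HQ. }
    intros Hint.
    rewrite HDe in Hcon.
    pose proof (du_formula (u t) du E l k Hl Hut HE (local_unit u t du Hint Hun Hdu) Hcon) as Hdf.
    rewrite Hdf.
    unfold fi, mobp in HQ; cbn [fst snd] in HQ.
    repeat rewrite ?Cplus_conj, ?Cmult_conj, ?Copp_conj, ?conj_RtoC in HQ |- *.
    rewrite (unit_conj E HE) in HQ |- *.
    assert (HEn : E <> RtoC 0) by (apply unit_nz; auto).
    set (c := cosh (k*t)) in *. set (s := sinh (k*t)) in *.
    set (w := u t) in *.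
    assert (HQ' : Cplus (Cmult (Copp (RtoC s)) w) (Cmult (RtoC c) E) <> RtoC 0).
    { intro HH. apply HQ. replace (Cplus (Cmult (Copp (Cmult (RtoC s) (Cinv E))) w) (RtoC c)) with (Cmult (Cinv E) (Cplus (Cmult (Copp (RtoC s)) w) (Cmult (RtoC c) E))) by (field; auto).
      rewrite HH. ring. }
    rewrite !RtoC_mult. repeat rewrite ?Cplus_conj, ?Cmult_conj, ?Copp_conj, ?conj_RtoC.
    rewrite (unit_conj E HE). field. repeat split; auto. }
  cbv beta in Hf. rewrite H0, H1 in Hf.
  unfold fi in Hf. rewrite Rmult_0_r, cosh_0, sinh_0', mobp_id' in Hf.
  rewrite <- Hf. rewrite mob_comp.
  - unfold fi. rewrite pm_inv by auto. symmetry. apply mobp_id0.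
  - apply su_flow; auto.
  - apply su_flowinv; auto.
  - rewrite <- H1. apply Hun. lra.
Qed.

Fixpoint segs_ok (vs : list C) : Prop :=
  match vs with
  | p :: ((q :: _) as rest) => Cminus q p <> RtoC 0 /\ segs_ok rest
  | _ => True
  end.

Fixpoint prodc (l : R) (vs : list C) : C * C :=
  match vs with
  | p :: ((q :: _) as rest) => pm (prodc l rest) (segP l (Cminus q p))
  | _ => (RtoC 1, RtoC 0)
  end.

Lemma su_segP l D : D <> RtoC 0 -> su (segP l D).
Proof.
  intros HD. replace (segP l D) with (flowP (kk l D) (ee D) 1).
  - apply su_flow, nrm2_ee; auto.
  - unfold segP, flowP. rewrite Rmult_1_r. reflexivity.
Qed.

Lemma su_id : su (RtoC 1, RtoC 0).
Proof. unfold su, nrm2; simpl; ring. Qed.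

Lemma su_prodc l vs : segs_ok vs -> su (prodc l vs).
Proof.
  induction vs as [|p rest IH]; simpl; intros H.
  - apply su_id.
  - destruct rest as [|q r].
    + apply su_id.
    + destruct H as [H1 H2]. apply su_pm; auto. apply su_segP; auto.
Qed.

Lemma poly_exists l vs z : 0 < l -> segs_ok vs -> nrm2 z = 1 -> poly_hol l vs z (mobp (prodc l vs) z).
Proof.
  intros Hl. revert z. induction vs as [|p rest IH]; intros z Hs Hz.
  - simpl. symmetry. apply mobp_id0.
  - destruct rest as [|q r].
    + simpl. symmetry. apply mobp_id0.
    + destruct Hs as [H1 H2].
      change (exists z1, seg_hol l p q z z1 /\ poly_hol l (q::r) z1 (mobp (pm (prodc l (q :: r)) (segP l (Cminus q p))) z)).
      exists (mobp (segP l (Cminus q p)) z). split.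
      * apply seg_exists; auto.
      * rewrite <- (mob_comp _ _ _ (su_prodc l (q::r) H2) (su_segP l _ H1) Hz).
        apply IH; auto. apply mob_circ; auto using su_segP.
Qed.

Lemma poly_unique l vs z z' : 0 < l -> segs_ok vs -> nrm2 z = 1 -> poly_hol l vs z z' -> z' = mobp (prodc l vs) z.
Proof.
  intros Hl. revert z. induction vs as [|p rest IH]; intros z Hs Hz H.
  - simpl in H. subst. symmetry. apply mobp_id0.
  - destruct rest as [|q r].
    + simpl in H. subst. symmetry. apply mobp_id0.
    + destruct Hs as [H1 H2].
      change (exists z1, seg_hol l p q z z1 /\ poly_hol l (q::r) z1 z') in H.
      change (z' = mobp (pm (prodc l (q :: r)) (segP l (Cminus q p))) z). destruct H as [z1 [Hs1 Hr]].
      apply seg_unique in Hs1; auto. subst z1.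
      rewrite <- (mob_comp _ _ _ (su_prodc l (q::r) H2) (su_segP l _ H1) Hz).
      apply IH; auto. apply mob_circ; auto using su_segP.
Qed.

Lemma SU11_pmat P : su P -> in_SU11 (pmat P).
Proof.
  destruct P as [[a1 a2] [b1 b2]]. unfold su, nrm2, in_SU11, mdet, pmat; simpl. intros H.
  repeat split; apply injective_projections; simpl; nra.
Qed.

Lemma main_alg (ar cr : R) (b d : C) : ar*ar - nrm2 b = 1 -> cr*cr - nrm2 d = 1 ->
  let A := (RtoC ar, Copp b) in let Ai := (RtoC ar, b) in
  let W := (RtoC cr, Copp d) in let Wi := (RtoC cr, d) in
  let M := pm (pm (pm (pm (pm (pm (pm (RtoC 1, RtoC 0) A) W) Ai) (pm Wi Wi)) Ai) W) A in
  2 * fst (fst M) = 2 + 16 * (Im (Cmult (Cconj b) d))^2 * nrm2 (Cplus (Cmult (RtoC ar) d) (Cmult b (RtoC cr)))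
  /\ snd (fst M) = 0.
Proof.
  destruct b as [b1 b2], d as [d1 d2]. unfold nrm2; simpl. intros Ha Hc.
  unfold pm; simpl. split.
  - nsatz.
  - ring.
Qed.

Lemma Cmod_1_of z : nrm2 z = 1 -> Cmod z = 1.
Proof. intros; apply Cmod1_nrm2; auto. Qed.

Lemma Cmod_sym x y : Cmod (Cminus x y) = Cmod (Cminus y x).
Proof. replace (Cminus x y) with (Copp (Cminus y x)) by ring. apply Cmod_opp. Qed.

Lemma Cmod_diff_le2 x y : nrm2 x = 1 -> nrm2 y = 1 -> Cmod (Cminus x y) <= 2.
Proof.
  intros Hx Hy. unfold Cminus. eapply Rle_trans. apply Cmod_triangle.
  rewrite Cmod_opp, !Cmod_1_of by auto. lra.
Qed.

Section Hyp.
Variables (al r : R) (z1 : C).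
Hypothesis Hr : 0 < r.
Hypothesis Har : al*al - r*r = 1.
Hypothesis Hal : 1 < al.
Hypothesis Hz1 : nrm2 z1 = 1.

Let P : C * C := (RtoC al, Cmult (RtoC r) z1).
Let m := mobp P.
Let z2 := Copp z1.

Lemma suP : su P.
Proof. unfold su, P; simpl fst; simpl snd. rewrite nrm2_mult, Hz1. unfold nrm2; simpl. lra. Qed.

Lemma z1nz : z1 <> RtoC 0.
Proof. apply unit_nz; auto. Qed.

Lemma hstep z : nrm2 z = 1 ->
  Cminus (m z) z1 = Cdiv (Cmult (Cminus z z1) (RtoC (al - r))) (Cplus (Cmult (Cconj (snd P)) z) (Cconj (fst P))) /\
  Cminus (m z) z2 = Cdiv (Cmult (Cminus z z2) (RtoC (al + r))) (Cplus (Cmult (Cconj (snd P)) z) (Cconj (fst P))).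
Proof.
  intros Hz. pose proof (den_nz P z suP Hz) as HQ. pose proof z1nz as H1.
  unfold m, z2, mobp, P in *; simpl fst in *; simpl snd in *.
  rewrite Cmult_conj, !conj_RtoC, (unit_conj z1 Hz1) in *.
  assert (Hal' : Cmult (RtoC (al - r)) (RtoC (al + r)) = RtoC 1).
  { rewrite <- RtoC_mult. f_equal. nra. }
  assert (HQ' : Cplus (Cmult (RtoC r) z) (Cmult (RtoC al) z1) <> RtoC 0).
  { intro HH. apply HQ. replace (Cplus (Cmult (Cmult (RtoC r) (Cinv z1)) z) (RtoC al)) with (Cmult (Cinv z1) (Cplus (Cmult (RtoC r) z) (Cmult (RtoC al) z1))) by (field; auto).
    rewrite HH. ring. }
  split; rewrite !RtoC_minus, !RtoC_plus in *; field; auto.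
Qed.

Lemma lam_pos : 0 < (al - r) / (al + r) < 1.
Proof.
  assert (0 < al + r) by lra. assert (0 < al - r) by nra.
  split. apply Rdiv_lt_0_compat; lra.
  apply (Rmult_lt_reg_r (al + r)); auto. unfold Rdiv. rewrite Rmult_assoc, Rinv_l by lra. lra.
Qed.

Definition rho (w : C) : R := Cmod (Cminus w z1) / Cmod (Cminus w z2).

Lemma hstep2 z : nrm2 z = 1 -> z <> z2 ->
  m z <> z2 /\ rho (m z) = (al - r) / (al + r) * rho z.
Proof.
  intros Hz Hne. destruct (hstep z Hz) as [E1 E2].
  pose proof (den_nz P z suP Hz) as HQ.
  assert (Hd : Cminus z z2 <> RtoC 0) by (intro HH; apply Hne; apply Ceq_minus; auto).
  assert (Hd2 : Cminus (m z) z2 <> RtoC 0).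
  { rewrite E2. unfold Cdiv. intro HH. apply Cmult_integral' in HH. destruct HH as [HH|HH].
    - apply Cmult_integral' in HH. destruct HH as [HH|HH]; auto. injection HH; lra.
    - apply (f_equal (Cmult (Cplus (Cmult (Cconj (snd P)) z) (Cconj (fst P))))) in HH.
      rewrite Cinv_r in HH by auto. apply C1_nz. rewrite HH. ring. }
  split.
  - intro HH. apply Hd2. rewrite HH. ring.
  - unfold rho. rewrite E1, E2. rewrite !Cmod_div, !Cmod_mult, !Cmod_R by auto.
    assert (0 < al - r) by nra.
    rewrite !Rabs_pos_eq by lra.
    pose proof (proj1 (Cmod_gt_0 _) Hd). pose proof (proj1 (Cmod_gt_0 _) HQ).
    field. repeat split; lra.
Qed.

Lemma iter_props z : nrm2 z = 1 -> z <> z2 -> forall n,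
  nrm2 (Nat.iter n m z) = 1 /\ Nat.iter n m z <> z2 /\ rho (Nat.iter n m z) = ((al - r) / (al + r))^n * rho z.
Proof.
  intros Hz Hne n. induction n as [|n [A [B C]]].
  - simpl. repeat split; auto. ring.
  - simpl. destruct (hstep2 _ A B) as [B' C']. repeat split; auto.
    + unfold m. apply mob_circ; auto. apply suP.
    + rewrite C', C. ring.
Qed.

Lemma near_z1 z : nrm2 z = 1 -> z <> z2 -> forall n,
  Cmod (Cminus (Nat.iter n m z) z1) <= 2 * rho z * ((al - r) / (al + r))^n.
Proof.
  intros Hz Hne n. destruct (iter_props z Hz Hne n) as [A [B C]].
  assert (Hd : Cminus (Nat.iter n m z) z2 <> RtoC 0) by (intro HH; apply B; apply Ceq_minus; auto).
  pose proof (proj1 (Cmod_gt_0 _) Hd) as Hp.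
  assert (E : Cmod (Cminus (Nat.iter n m z) z1) = rho (Nat.iter n m z) * Cmod (Cminus (Nat.iter n m z) z2)).
  { unfold rho. field. lra. }
  rewrite E, C.
  assert (Hz2 : nrm2 z2 = 1) by (unfold z2; rewrite nrm2_opp; auto).
  pose proof (Cmod_diff_le2 _ _ A Hz2).
  assert (0 <= rho z) by (unfold rho; apply Rdiv_le_0_compat; [apply Cmod_ge_0 | apply (proj1 (Cmod_gt_0 _)); intro HH; apply Hne; apply Ceq_minus; auto]).
  pose proof lam_pos. assert (0 <= ((al - r) / (al + r))^n) by (apply pow_le; lra).
  assert (0 <= rho z * ((al - r) / (al + r))^n) by (apply Rmult_le_pos; lra).
  nra.
Qed.

Lemma z1_ne_z2 : z1 <> z2.
Proof.
  unfold z2. intro HH. pose proof Hz1 as H1. destruct z1 as [x y]. unfold Copp in HH; simpl in HH.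
  injection HH; intros. unfold nrm2 in H1; simpl in H1. assert (x = 0) by lra. assert (y = 0) by lra. subst. lra.
Qed.

Lemma hyp_attr : attracting_on_circle m z1.
Proof.
  pose proof z1_ne_z2 as Hne. assert (Hd : Cminus z1 z2 <> RtoC 0) by (intro HH; apply Hne; apply Ceq_minus; auto).
  pose proof (proj1 (Cmod_gt_0 _) Hd) as Hp.
  exists (Cmod (Cminus z1 z2) / 2). split. lra.
  intros z Hz Hzz.
  apply Cmod1_nrm2 in Hz.
  assert (Hz' : z <> z2).
  { intro HH. subst z. rewrite Cmod_sym in Hzz. lra. }
  apply (is_lim_seq_le_le (fun _ => 0) _ (fun n => 2 * rho z * ((al - r) / (al + r))^n)).
  - intros n. split. apply Cmod_ge_0. apply near_z1; auto.
  - apply is_lim_seq_const.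
  - replace (Finite 0) with (Rbar_mult (2 * rho z) 0) by (simpl; f_equal; ring).
    apply is_lim_seq_scal_l. apply is_lim_seq_geom. pose proof lam_pos. rewrite Rabs_pos_eq; lra.
Qed.

Lemma hyp_rep : repelling_on_circle m z2.
Proof.
  pose proof z1_ne_z2 as Hne. assert (Hd : Cminus z1 z2 <> RtoC 0) by (intro HH; apply Hne; apply Ceq_minus; auto).
  pose proof (proj1 (Cmod_gt_0 _) Hd) as Hp.
  exists (Cmod (Cminus z1 z2) / 2). split. lra.
  intros z Hz [Hz0 Hzz].
  apply Cmod1_nrm2 in Hz.
  assert (Hz' : z <> z2).
  { intro HH. subst z. unfold Cminus in Hz0. rewrite Cplus_opp_r, Cmod_0 in Hz0. lra. }
  assert (0 <= rho z) by (unfold rho; apply Rdiv_le_0_compat; [apply Cmod_ge_0 | apply (proj1 (Cmod_gt_0 _)); intro HH; apply Hz'; apply Ceq_minus; auto]).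
  pose proof lam_pos.
  destruct (pow_lt_1_zero ((al - r) / (al + r)) ltac:(rewrite Rabs_pos_eq; lra)
              (Cmod (Cminus z1 z2) / 2 / (2 * rho z + 1)) ltac:(apply Rdiv_lt_0_compat; lra)) as [N HN].
  exists N. specialize (HN N (le_n N)). rewrite Rabs_pos_eq in HN by (apply pow_le; lra).
  pose proof (near_z1 z Hz Hz' N) as HB.
  assert (HB2 : 2 * rho z * ((al - r) / (al + r))^N < Cmod (Cminus z1 z2) / 2).
  { apply Rmult_lt_compat_l with (r := 2 * rho z + 1) in HN; [|lra].
    replace ((2 * rho z + 1) * (Cmod (Cminus z1 z2) / 2 / (2 * rho z + 1))) with (Cmod (Cminus z1 z2) / 2) in HN by (field; lra).
    assert (0 <= ((al - r) / (al + r))^N) by (apply pow_le; lra). nra. }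
  assert (Ht : Cmod (Cminus z1 z2) <= Cmod (Cminus z1 (Nat.iter N m z)) + Cmod (Cminus (Nat.iter N m z) z2)).
  { replace (Cminus z1 z2) with (Cplus (Cminus z1 (Nat.iter N m z)) (Cminus (Nat.iter N m z) z2)) by ring.
    apply Cmod_triangle. }
  rewrite (Cmod_sym z1 (Nat.iter N m z)) in Ht. lra.
Qed.

Lemma hyp_fix1 : m z1 = z1.
Proof.
  pose proof (hstep z1 Hz1) as [E1 _]. unfold Cminus at 2 in E1. rewrite Cplus_opp_r in E1.
  apply Ceq_minus. rewrite E1. unfold Cdiv. ring.
Qed.

Lemma hyp_fix2 : m z2 = z2.
Proof.
  assert (Hz2 : nrm2 z2 = 1) by (unfold z2; rewrite nrm2_opp; auto).
  pose proof (hstep z2 Hz2) as [_ E2]. unfold Cminus at 2 in E2. rewrite Cplus_opp_r in E2.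
  apply Ceq_minus. rewrite E2. unfold Cdiv. ring.
Qed.

Lemma hyp_uniq z : nrm2 z = 1 -> m z = z -> z = z1 \/ z = z2.
Proof.
  intros Hz Hf. destruct (hstep z Hz) as [E1 E2].
  pose proof (den_nz P z suP Hz) as HQ.
  rewrite Hf in E1, E2.
  assert (K : Cmult (Cminus z z1) (Cminus z z2) = RtoC 0).
  {
    set (Q := Cplus (Cmult (Cconj (snd P)) z) (Cconj (fst P))) in *.
    assert (A1 : Cmult (Cminus z z1) (Cminus Q (RtoC (al - r))) = RtoC 0).
    { replace (Cmult (Cminus z z1) (Cminus Q (RtoC (al - r)))) with (Cminus (Cmult (Cminus z z1) Q) (Cmult (Cminus z z1) (RtoC (al - r)))) by ring.
      rewrite E1 at 1. unfold Cdiv. field. auto. }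
    assert (A2 : Cmult (Cminus z z2) (Cminus Q (RtoC (al + r))) = RtoC 0).
    { replace (Cmult (Cminus z z2) (Cminus Q (RtoC (al + r)))) with (Cminus (Cmult (Cminus z z2) Q) (Cmult (Cminus z z2) (RtoC (al + r)))) by ring.
      rewrite E2 at 1. unfold Cdiv. field. auto. }
    apply Cmult_integral' in A1. destruct A1 as [A1|A1].
    - rewrite A1. ring.
    - apply Cmult_integral' in A2. destruct A2 as [A2|A2].
      + rewrite A2. ring.
      + exfalso. apply Ceq_minus in A1. apply Ceq_minus in A2. rewrite A1 in A2.
        injection A2. lra. }
  apply Cmult_integral' in K. destruct K as [K|K]; [left|right]; apply Ceq_minus; auto.
Qed.

End Hyp.

Lemma segP_gen l D : segP l D =
  (RtoC (cosh (Cmod D / (2*l))), Copp (Cmult (RtoC (- sinh (Cmod D / (2*l)))) (Cdiv D (RtoC (Cmod D))))).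
Proof.
  unfold segP, kk, ee. f_equal. apply injective_projections; simpl; ring.
Qed.

Lemma segP_opp l D : D <> RtoC 0 -> segP l (Copp D) =
  (RtoC (cosh (Cmod D / (2*l))), Cmult (RtoC (- sinh (Cmod D / (2*l)))) (Cdiv D (RtoC (Cmod D)))).
Proof.
  intros HD. pose proof (Cmod_pos D HD).
  unfold segP, kk, ee. rewrite Cmod_opp. f_equal.
  assert (RtoC (Cmod D) <> RtoC 0) by (intro HH; injection HH; lra).
  rewrite RtoC_opp. field. auto.
Qed.

Lemma segP_2 l D : 0 < l -> D <> RtoC 0 -> segP l (Cmult (RtoC 2) D) = pm (segP l D) (segP l D).
Proof.
  intros Hl HD. pose proof (Cmod_pos D HD). pose proof (nrm2_ee D HD) as HE.
  unfold segP, kk, ee, pm. simpl fst; simpl snd.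
  rewrite Cmod_mult, Cmod_R, Rabs_pos_eq by lra.
  replace (2 * Cmod D / (2 * l)) with (2 * (Cmod D / (2*l))) by (field; lra).
  rewrite cosh_2x, sinh_2x.
  set (x := Cmod D / (2*l)). unfold ee in HE.
  assert (E : Cdiv (Cmult (RtoC 2) D) (RtoC (2 * Cmod D)) = Cdiv D (RtoC (Cmod D))).
  { assert (RtoC (Cmod D) <> RtoC 0) by (intro HH; injection HH; lra).
    rewrite RtoC_mult. field. try assumption. }
  rewrite E. set (e := Cdiv D (RtoC (Cmod D))) in *. clearbody e.
  rewrite Cmult_conj, !conj_RtoC.
  destruct e as [e1 e2]. unfold nrm2 in HE; simpl in HE.
  apply injective_projections; apply injective_projections; simpl; set (cc := cosh x); set (ss := sinh x); clearbody cc ss x; first [ring | (clear - HE; nsatz)].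
Qed.

Lemma nz_of_im (v w : C) : Im (Cmult (Cconj v) w) <> 0 -> v <> RtoC 0 /\ w <> RtoC 0.
Proof.
  intros H. split; intro E; apply H; subst; unfold Im; simpl; ring.
Qed.

Lemma Cmod2 x : Cmod x ^ 2 = nrm2 x.
Proof. rewrite Cmod_nrm2. rewrite pow2_sqrt; auto. apply nrm2_nonneg. Qed.

Lemma ab_rel (l : R) (v : C) : v <> RtoC 0 ->
  cosh (Cmod v / (2*l)) * cosh (Cmod v / (2*l)) -
  nrm2 (Cmult (RtoC (- sinh (Cmod v / (2*l)))) (Cdiv v (RtoC (Cmod v)))) = 1.
Proof.
  intros Hv. rewrite nrm2_mult. pose proof (nrm2_ee v Hv) as HE. unfold ee in HE. rewrite HE.
  pose proof (ch_sh (Cmod v / (2*l))). unfold nrm2; simpl. lra.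
Qed.

Lemma Im_bd (s1 s2 m1 m2 : R) (v w : C) : m1 <> 0 -> m2 <> 0 ->
  Im (Cmult (Cconj (Cmult (RtoC (-s1)) (Cdiv v (RtoC m1)))) (Cmult (RtoC (-s2)) (Cdiv w (RtoC m2))))
  = s1*s2/(m1*m2) * Im (Cmult (Cconj v) w).
Proof.
  intros H1 H2. destruct v as [v1 v2], w as [w1 w2]. unfold Im, Cdiv, Cinv, Cmult, Cconj, RtoC; simpl.
  field. split; auto.
Qed.

Lemma Im_X (ar cr : R) (b d : C) :
  Im (Cmult (Cconj b) (Cplus (Cmult (RtoC ar) d) (Cmult b (RtoC cr)))) = ar * Im (Cmult (Cconj b) d).
Proof. destruct b, d; unfold Im; simpl; ring. Qed.

Theorem mainTheorem8 (l : R) (v w : C)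
  (hl : (0 < l)%R)
  (hvw : Im (Cmult (Cconj v) w) <> 0%R) :
  let a : C := RtoC (cosh (Cmod v / (2 * l))) in
  let b : C := Cmult (RtoC (- sinh (Cmod v / (2 * l)))) (Cdiv v (RtoC (Cmod v))) in
  let c : C := RtoC (cosh (Cmod w / (2 * l))) in
  let d : C := Cmult (RtoC (- sinh (Cmod w / (2 * l)))) (Cdiv w (RtoC (Cmod w))) in
  let tr : R := (2 + 16 * (Im (Cmult (Cconj b) d)) ^ 2
                   * (Cmod (Cplus (Cmult a d) (Cmult b c))) ^ 2)%R in
  let H := poly_hol l
     [RtoC 0; v; Cplus v w; w; Copp w; Cminus (Copp v) w; Copp v; RtoC 0] in
  (forall z, on_circle z -> exists z', H z z') /\
  exists M : cmat2,
    in_SU11 M /\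
    (forall z z', on_circle z -> H z z' -> z' = mob M z) /\
    mtrace M = RtoC tr /\ (2 < tr)%R /\
    exists z1 z2 : C,
      on_circle z1 /\ on_circle z2 /\ z1 <> z2 /\
      mob M z1 = z1 /\ mob M z2 = z2 /\
      (forall z, on_circle z -> mob M z = z -> z = z1 \/ z = z2) /\
      attracting_on_circle (mob M) z1 /\ repelling_on_circle (mob M) z2.
Proof.
  intros a b c d tr H.
  destruct (nz_of_im v w hvw) as [Hv Hw].
  set (vs := [RtoC 0; v; Cplus v w; w; Copp w; Cminus (Copp v) w; Copp v; RtoC 0]).
  assert (Hok : segs_ok vs).
  { unfold vs; cbn [segs_ok].
    replace (Cminus v (RtoC 0)) with v by ring.
    replace (Cminus (Cplus v w) v) with w by ring.
    replace (Cminus w (Cplus v w)) with (Copp v) by ring.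
    replace (Cminus (Copp w) w) with (Cmult (RtoC 2) (Copp w)) by ring.
    replace (Cminus (Cminus (Copp v) w) (Copp w)) with (Copp v) by ring.
    replace (Cminus (Copp v) (Cminus (Copp v) w)) with w by ring.
    replace (Cminus (RtoC 0) (Copp v)) with v by ring.
    assert (Copp v <> RtoC 0) by (intro HH; apply Hv; replace v with (Copp (Copp v)) by ring; rewrite HH; ring).
    assert (Cmult (RtoC 2) (Copp w) <> RtoC 0).
    { intro HH. apply Cmult_integral' in HH. destruct HH as [HH|HH].
      - injection HH; lra.
      - apply Hw. replace w with (Copp (Copp w)) by ring; rewrite HH; ring. }
    tauto. }
  assert (HM : prodc l vs =
     pm (pm (pm (pm (pm (pm (pm (RtoC 1, RtoC 0) (a, Copp b)) (c, Copp d)) (a, b)) (pm (c, d) (c, d))) (a, b)) (c, Copp d)) (a, Copp b)).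
  { unfold vs. cbn [prodc].
    replace (Cminus v (RtoC 0)) with v by ring.
    replace (Cminus (Cplus v w) v) with w by ring.
    replace (Cminus w (Cplus v w)) with (Copp v) by ring.
    replace (Cminus (Copp w) w) with (Cmult (RtoC 2) (Copp w)) by ring.
    replace (Cminus (Cminus (Copp v) w) (Copp w)) with (Copp v) by ring.
    replace (Cminus (Copp v) (Cminus (Copp v) w)) with w by ring.
    replace (Cminus (RtoC 0) (Copp v)) with v by ring.
    assert (Copp w <> RtoC 0) by (intro HH; apply Hw; replace w with (Copp (Copp w)) by ring; rewrite HH; ring).
    rewrite (segP_2 l (Copp w) hl H0).
    rewrite !segP_opp by auto. rewrite !segP_gen. reflexivity. }
  set (P := prodc l vs) in *.
  assert (HsuP : su P) by (apply su_prodc; auto).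
  pose proof (ab_rel l v Hv) as Hab. pose proof (ab_rel l w Hw) as Hcd.
  pose proof (main_alg _ _ _ _ Hab Hcd) as [Htr Him]. cbv zeta in Htr, Him.
  fold a b c d in Htr, Him. rewrite <- HM in Htr, Him.
  assert (HPdef : P = prodc l vs) by reflexivity. clearbody P.
  split.
  { intros z Hz. exists (mobp P z). rewrite HPdef. apply poly_exists; auto. apply Cmod1_nrm2; auto. }
  exists (pmat P).
  assert (Htr' : 2 * fst (fst P) = tr).
  { rewrite Htr. unfold tr. rewrite Cmod2. reflexivity. }
  assert (Hpos : 2 < tr).
  { assert (HI : Im (Cmult (Cconj b) d) <> 0).
    { unfold b, d. pose proof (Cmod_pos v Hv). pose proof (Cmod_pos w Hw).
      rewrite Im_bd by lra.
      assert (0 < sinh (Cmod v / (2*l))) by (apply sinh_pos; apply Rdiv_lt_0_compat; lra).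
      assert (0 < sinh (Cmod w / (2*l))) by (apply sinh_pos; apply Rdiv_lt_0_compat; lra).
      assert (0 < sinh (Cmod v / (2 * l)) * sinh (Cmod w / (2 * l)) / (Cmod v * Cmod w)).
      { apply Rdiv_lt_0_compat; apply Rmult_lt_0_compat; lra. }
      intro HH. apply Rmult_integral in HH. destruct HH; [lra|auto]. }
    assert (HX : Cplus (Cmult a d) (Cmult b c) <> RtoC 0).
    { intro HH. pose proof (Im_X (cosh (Cmod v / (2 * l))) (cosh (Cmod w / (2 * l))) b d) as K.
      fold a c in K. rewrite HH in K.
      assert (K0 : Im (Cmult (Cconj b) (RtoC 0)) = 0) by (unfold Im; simpl; ring).
      rewrite K0 in K. symmetry in K. apply Rmult_integral in K.
      pose proof (cosh_pos (Cmod v / (2 * l))). destruct K; [lra|auto]. }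
    pose proof (proj1 (Cmod_gt_0 _) HX).
    unfold tr. assert (0 < Im (Cmult (Cconj b) d) ^ 2) by (apply pow2_gt_0; auto).
    assert (0 < Cmod (Cplus (Cmult a d) (Cmult b c)) ^ 2) by (apply pow2_gt_0; lra).
    assert (0 < Im (Cmult (Cconj b) d) ^ 2 * Cmod (Cplus (Cmult a d) (Cmult b c)) ^ 2) by (apply Rmult_lt_0_compat; auto).
    nra. }
  split. { apply SU11_pmat; auto. }
  split. { intros z z' Hz Hzz. rewrite HPdef. apply (poly_unique l vs z z'); auto. apply Cmod1_nrm2; auto. }
  split. { unfold mtrace, pmat; cbn [m11 m22]. rewrite <- Htr'.
           destruct (fst P) as [x y]; simpl in *. subst y. apply injective_projections; simpl; ring. }
  split. { exact Hpos. }
  destruct P as [[al y] be]. simpl in Him, Htr'. subst y.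
  unfold su in HsuP. simpl in HsuP. unfold nrm2 at 1 in HsuP. simpl in HsuP.
  assert (Hal : 1 < al) by lra.
  set (r := Cmod be).
  assert (Hr2 : r * r = nrm2 be) by (unfold r; rewrite <- Cmod2; ring).
  assert (Hr : 0 < r).
  { assert (0 <= r) by apply Cmod_ge_0. assert (0 < r*r) by nra. destruct (Req_dec r 0); [subst; nra | lra]. }
  set (z1 := Cmult be (RtoC (/ r))).
  assert (Hz1 : nrm2 z1 = 1).
  { unfold z1. rewrite nrm2_mult. unfold nrm2 at 2; simpl. rewrite <- Hr2. field. lra. }
  assert (Hbe : be = Cmult (RtoC r) z1).
  { unfold z1. assert (RtoC r <> RtoC 0) by (intro HH; injection HH; lra). rewrite RtoC_inv by lra. field. auto. }
  assert (Har : al * al - r * r = 1) by lra.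
  rewrite Hbe. clearbody z1 r.
  exists z1, (Copp z1).
  assert (Hz2 : nrm2 (Copp z1) = 1) by (rewrite nrm2_opp; auto).
  split. { apply Cmod1_nrm2; auto. }
  split. { apply Cmod1_nrm2; auto. }
  split. { apply (z1_ne_z2 al r); auto. }
  split. { exact (hyp_fix1 al r z1 Har Hz1). }
  split. { exact (hyp_fix2 al r z1 Har Hz1). }
  split. { intros z Hz Hf. apply Cmod1_nrm2 in Hz. exact (hyp_uniq al r z1 Hr Har Hz1 z Hz Hf). }
  split. { exact (hyp_attr al r z1 Hr Har Hal Hz1). }
  exact (hyp_rep al r z1 Hr Har Hal Hz1).
Qed.
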